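(* Let $(X,Y)$ be a bivariate random vector that is reverse exchangeable, i.e. $(X,Y)$ and $(-Y,-X)$ have the same joint distribution. Then $$|\max(X,Y)|\overset{d}{=}|\min(X,Y)|\overset{d}{=}|X|\overset{d}{=}|Y|.$$
   Context: $\overset{d}{=}$ denotes equality in distribution. *)

(* Defs.v *)
From HB Require Import structures.
From mathcomp Require Import all_boot all_order all_algebra.
From mathcomp Require Import all_classical all_reals all_analysis.
Set Implicit Arguments. Unset Strict Implicit. Unset Printing Implicit Defensive.
Import Order.TTheory GRing.Theory Num.Theory.
Local Open Scope classical_set_scope.
Local Open Scope ring_scope.

Definition eq_in_law d (T : measurableType d) (R : realType)
  (P : probability T R) d' (U : measurableType d') (X Y : T -> U) : Prop :=
  forall A : set U, measurable A -> P (X @^-1` A) = P (Y @^-1` A).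

Definition reverse_exchangeable d (T : measurableType d) (R : realType)
  (P : probability T R) (X Y : T -> R) : Prop :=
  eq_in_law P (fun w => (X w, Y w)) (fun w => (- Y w, - X w)).

(* Main.v *)
Require Import Defs.
From HB Require Import structures.
From mathcomp Require Import all_boot all_order all_algebra.
From mathcomp Require Import all_classical all_reals all_analysis.
From mathcomp Require Import measurable_realfun.
From mathcomp Require Import lra.
Import Order.TTheory GRing.Theory Num.Theory.
Local Open Scope classical_set_scope.
Local Open Scope ring_scope.

Lemma rex_fun (d : measure_display) (T : measurableType d) (R : realType)
  (P : probability T R) (X Y : T -> R) (g : R * R -> R) :
  measurable_fun setT g ->
  reverse_exchangeable P X Y ->
  eq_in_law P (fun w => g (X w, Y w)) (fun w => g (- Y w, - X w)).
Proof.
move=> mg H A mA.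
have mgA : measurable (g @^-1` A) by rewrite -[_ @^-1` _]setTI; exact: mg.
exact: (H _ mgA).
Qed.
Arguments rex_fun {d T R P X Y g}.

Lemma mpre (d : measure_display) (T : measurableType d) (R : realType)
  (X Y : T -> R) (g : R * R -> R) (A : set R) :
  measurable_fun setT X -> measurable_fun setT Y ->
  measurable_fun setT g -> measurable A ->
  measurable ((fun w => g (X w, Y w)) @^-1` A).
Proof.
move=> mX mY mg mA.
rewrite -[_ @^-1` _]setTI.
apply: (measurableT_comp mg (measurable_fun_pair mX mY)) => //.
Qed.
Arguments mpre {d T R X Y g A}.

Theorem theorem2p4 (d : measure_display) (T : measurableType d) (R : realType)
  (P : probability T R) (X Y : T -> R)
  (mX : measurable_fun setT X) (mY : measurable_fun setT Y) :
  reverse_exchangeable P X Y ->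
  [/\ eq_in_law P (fun w => `|Num.max (X w) (Y w)|) (fun w => `|Num.min (X w) (Y w)|),
      eq_in_law P (fun w => `|Num.min (X w) (Y w)|) (fun w => `|X w|)
    & eq_in_law P (fun w => `|X w|) (fun w => `|Y w|)].
Proof.
move=> H.
have mgmax : measurable_fun setT (fun p : R * R => `|Num.max p.1 p.2|).
  apply: measurableT_comp; first exact: normr_measurable.
  exact: (measurable_maxr measurable_fst measurable_snd).
have mgmin : measurable_fun setT (fun p : R * R => `|Num.min p.1 p.2|).
  apply: measurableT_comp; first exact: normr_measurable.
  exact: (measurable_minr measurable_fst measurable_snd).
have mg1 : measurable_fun setT (fun p : R * R => `|p.1|).
  apply: measurableT_comp; first exact: normr_measurable.
  exact: measurable_fst.
have mg2 : measurable_fun setT (fun p : R * R => `|p.2|).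
  apply: measurableT_comp; first exact: normr_measurable.
  exact: measurable_snd.
have E1 : eq_in_law P (fun w => `|Num.max (X w) (Y w)|) (fun w => `|Num.min (X w) (Y w)|).
  move=> A mA; rewrite (rex_fun mgmax H _ mA) /=.
  congr (P _); apply/funext => w /=.
  by rewrite -oppr_min normrN minC.
have E3 : eq_in_law P (fun w => `|X w|) (fun w => `|Y w|).
  move=> A mA; rewrite (rex_fun mg1 H _ mA) /=.
  by congr (P _); apply/funext => w /=; rewrite normrN.
split => //.
move=> A mA.
set Emin := (fun w => `|Num.min (X w) (Y w)|) @^-1` A.
set Emax := (fun w => `|Num.max (X w) (Y w)|) @^-1` A.
set EX := (fun w => `|X w|) @^-1` A.
set EY := (fun w => `|Y w|) @^-1` A.
have mEmin : measurable Emin by exact: (mpre mX mY mgmin).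
have mEmax : measurable Emax by exact: (mpre mX mY mgmax).
have mEX : measurable EX by exact: (mpre mX mY mg1).
have mEY : measurable EY by exact: (mpre mX mY mg2).
have HI : Emin `&` Emax = EX `&` EY.
  apply/seteqP; split => w /=; rewrite /Emin /Emax /EX /EY /=;
  by case: (leP (X w) (Y w)) => _ [] ? ?; split.
have HU : Emin `|` Emax = EX `|` EY.
  apply/seteqP; split => w /=; rewrite /Emin /Emax /EX /EY /=;
  by case: (leP (X w) (Y w)) => _ [] ?; [left|right|right|left].
have ltf : forall E, measurable E -> (P E < +oo)%E.
  by move=> E mE; rewrite (le_lt_trans (probability_le1 P mE)) // ltry.
have fin : forall E, measurable E -> (P E \is a fin_num)%E.
  by move=> E mE; rewrite ge0_fin_numE // ltf.
have k : (P Emin + P Emax = P EX + P EY)%E.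
  have := measureUfinl mEmin mEmax (ltf _ mEmin).
  rewrite HU HI (measureUfinl mEX mEY (ltf _ mEX)).
  move/(congr1 (fun z => z + P (EX `&` EY))%E).
  by rewrite !subeK // fin //; exact: measurableI.

move: k; rewrite -/Emax -/EX (E1 A mA) -(E3 A mA) -/Emin -/EX.
move: (fin _ mEmin) (fin _ mEX).
case: (P Emin) => // a _; case: (P EX) => // b _.
rewrite -!EFinD => -[] h; congr EFin.

lra.
Qed.
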